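(* (i) If $v=2k$ is even, then $\mathrm{A}_q(v,2)=\sum_{0\le i\le v,\ i\equiv k\ (\mathrm{mod}\ 2)}\begin{bmatrix}v\\i\end{bmatrix}_q$, and the unique set of subspaces of $\mathbb{F}_q^v$ of this size with pairwise subspace distance $\ge2$ is the set of all subspaces $X$ with $\dim X\equiv k\pmod 2$. (ii) If $v=2k+1$ is odd, then $\mathrm{A}_q(v,2)=\sum_{i\text{ even}}\begin{bmatrix}v\\i\end{bmatrix}_q=\sum_{i\text{ odd}}\begin{bmatrix}v\\i\end{bmatrix}_q$, and there are exactly two sets of subspaces of $\mathbb{F}_q^v$ of this size with pairwise distance $\ge2$, namely the set of all even-dimensional subspaces and the set of all odd-dimensional subspaces; these two codes are isomorphic.
   Context: $\mathrm{d}_{\mathrm{S}}(X,Y)=\dim(X+Y)-\dim(X\cap Y)$. $\mathrm{A}_q(v,d)$ is the maximum size of a set of subspaces of $\mathbb{F}_q^v$ with pairwise subspace distance $\geq d$. Gaussian binomial $\begin{bmatrix}n\\k\end{bmatrix}_q$ = number of $k$-dimensional subspaces of $\mathbb{F}_q^n$. Two codes are isomorphic if some $\mathrm{d}_{\mathrm{S}}$-isometry of the subspace lattice of $\mathbb{F}_q^v$ maps one onto the other. *)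

(* Defs.v *)
From HB Require Import structures.
From mathcomp Require Import all_boot all_order all_algebra all_field.
Set Implicit Arguments. Unset Strict Implicit. Unset Printing Implicit Defensive.
Import GRing.Theory.
Local Open Scope ring_scope.

Import VectorInternalTheory.
Section SubspaceFin.
Variables (F : finFieldType) (n : nat).
HB.instance Definition _ := [Countable of {vspace 'rV[F]_n} by <:].
HB.instance Definition _ := [Finite of {vspace 'rV[F]_n} by <:].
End SubspaceFin.

(* The subspaces of F^v (F a finite field, F = F_q with q = #|F|). *)
Notation subspace F v := {vspace 'rV[F]_v}.

Definition dS (F : finFieldType) (v : nat) (X Y : subspace F v) : nat :=
  (\dim (X + Y) - \dim (X :&: Y))%N.

Definition is_code (F : finFieldType) (v d : nat) (C : {set subspace F v}) : bool :=
  [forall X in C, forall Y in C, (X != Y) ==> (d <= dS X Y)%N].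

Definition Aq (F : finFieldType) (v d : nat) : nat :=
  \max_(C : {set subspace F v} | is_code d C) #|C|.

Definition gauss (F : finFieldType) (n k : nat) : nat :=
  #|[set X : subspace F n | \dim X == k]|.

Definition dS_isometry (F : finFieldType) (v : nat) (f : subspace F v -> subspace F v) : Prop :=
  bijective f /\ forall X Y, dS (f X) (f Y) = dS X Y.

Definition codes_isomorphic (F : finFieldType) (v : nat) (C1 C2 : {set subspace F v}) : Prop :=
  exists f, dS_isometry f /\ f @: C1 = C2.

(* Main.v *)
Require Import Defs.
From HB Require Import structures.
From mathcomp Require Import all_boot all_order all_algebra all_field.
From mathcomp Require Import ring lra zify.

Module P1.
Set Implicit Arguments. Unset Strict Implicit. Unset Printing Implicit Defensive.
Import GRing.Theory.
Local Open Scope ring_scope.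

Section Orth.
Variables (F : finFieldType) (n : nat).
Local Notation V := 'rV[F]_n.
Local Notation S := {vspace V}.

Definition dotv (u w : V) : F := \sum_(j < n) u 0 j * w 0 j.

Lemma dotvC u w : dotv u w = dotv w u.
Proof. by apply: eq_bigr => j _; rewrite mulrC. Qed.

Lemma dotvD u w1 w2 : dotv u (w1 + w2) = dotv u w1 + dotv u w2.
Proof. by rewrite /dotv -big_split; apply: eq_bigr => j _; rewrite mxE mulrDr. Qed.

Lemma dotvZ u a w : dotv u (a *: w) = a * dotv u w.
Proof. by rewrite /dotv mulr_sumr; apply: eq_bigr => j _; rewrite mxE mulrCA. Qed.

Lemma dotv0 u : dotv u 0 = 0.
Proof. by rewrite /dotv big1 // => j _; rewrite mxE mulr0. Qed.

Lemma dotv_sum u I (r : seq I) (P : pred I) (f : I -> V) :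
  dotv u (\sum_(i <- r | P i) f i) = \sum_(i <- r | P i) dotv u (f i).
Proof.
elim/big_rec2: _ => [|i y w _ <-]; first exact: dotv0.
by rewrite dotvD.
Qed.

Definition Bmx (X : S) : 'M[F]_(\dim X, n) := \matrix_(i, j) ((vbasis X)`_i 0 j).

Definition orth (X : S) : S := lker (linfun (@mulmxr F 1 _ _ (Bmx X)^T)).

Lemma memorth (X : S) u : reflect (forall x, x \in X -> dotv u x = 0) (u \in orth X).
Proof.
rewrite memv_ker lfunE /=.
have E i : (u *m (Bmx X)^T) 0 i = dotv u (vbasis X)`_i.
  by rewrite mxE; apply: eq_bigr => j _; rewrite !mxE.
apply: (iffP eqP) => [H x Hx | H].
  rewrite (coord_vbasis Hx) dotv_sum big1 // => i _.
  by rewrite dotvZ -E H mxE mulr0.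
apply/rowP => i; rewrite E mxE H //.
by apply: vbasis_mem; apply: memt_nth.
Qed.

Lemma orthS (X Y : S) : (X <= Y)%VS -> (orth Y <= orth X)%VS.
Proof.
move/subvP=> sXY; apply/subvP => u /memorth H; apply/memorth => x Hx.
exact: H (sXY _ Hx).
Qed.

Lemma orthD (X Y : S) : orth (X + Y) = (orth X :&: orth Y)%VS.
Proof.
apply/vspaceP => u; rewrite memv_cap.
apply/memorth/andP => [H | [/memorth H1 /memorth H2]].
  split; apply/memorth => x Hx; apply: H.
    exact: (subvP (addvSl X Y)).
  exact: (subvP (addvSr X Y)).
move=> z /memv_addP [x Hx [y Hy ->]]; by rewrite dotvD H1 // H2 // addr0.
Qed.

Lemma sub_orth2 (X : S) : (X <= orth (orth X))%VS.
Proof.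
apply/subvP => x Hx; apply/memorth => u /memorth Hu.
by rewrite dotvC Hu.
Qed.

Lemma orthf : orth fullv = 0%VS.
Proof.
apply/eqP; rewrite -subv0; apply/subvP => u /memorth H.
rewrite memv0; apply/eqP/rowP => j; rewrite mxE.
have := H (delta_mx 0 j) (memvf _).
rewrite /dotv (bigD1 j) //= big1 => [|l /negbTE nlj]; last by rewrite mxE nlj andbF mulr0.
by rewrite !mxE !eqxx mulr1 addr0.
Qed.

Lemma dimS_n (X : S) : (\dim X <= n)%N.
Proof. by have := dimvS (subvf X); rewrite dimvf dim_matrix mul1r. Qed.

Lemma dim_orth_ge (X : S) : (n - \dim X <= \dim (orth X))%N.
Proof.
have := limg_ker_dim (linfun (@mulmxr F 1 _ _ (Bmx X)^T)) fullv.
rewrite capfv dimvf dim_matrix mul1r -/(orth X) => E.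
have : (\dim (linfun (@mulmxr F 1 _ _ (Bmx X)^T) @: fullv) <= \dim X)%N.
  by have := dimvS (subvf (linfun (@mulmxr F 1 _ _ (Bmx X)^T) @: fullv)); rewrite dimvf dim_matrix mul1r.
move=> H.
move: E H. set t := \dim (limg _). set o := \dim (orth X). set d := \dim X. move=> E H. lia.
Qed.

Lemma dim_orth (X : S) : \dim (orth X) = (n - \dim X)%N.
Proof.
have h1 := dim_orth_ge X; have h2 := dim_orth_ge X^C.
rewrite dimv_compl dimvf dim_matrix mul1r in h2.
have := dimv_sum_cap (orth X) (orth X^C).
rewrite -orthD addv_complf orthf dimv0.
have := dimS_n (orth X + orth X^C); have := dimS_n X.
lia.
Qed.

Lemma orthK (X : S) : orth (orth X) = X.
Proof.
apply/eqP; rewrite eq_sym eqEdim sub_orth2 !dim_orth.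
have := dimS_n X; lia.
Qed.

Lemma orthI (X Y : S) : orth (X :&: Y) = (orth X + orth Y)%VS.
Proof. by rewrite -{1}(orthK X) -{1}(orthK Y) -orthD orthK. Qed.

Lemma orth_inj : injective orth.
Proof. by move=> X Y E; rewrite -(orthK X) E orthK. Qed.

Lemma dS_orth (X Y : S) : dS (orth X) (orth Y) = dS X Y.
Proof.
rewrite /dS -orthD -orthI !dim_orth.
have := dimS_n (X + Y); have := dimS_n (X :&: Y).
have := dimvS (subv_trans (capvSl X Y) (addvSl X Y)). lia.
Qed.
End Orth.

End P1.
Import P1.

Module P2.
Set Implicit Arguments. Unset Strict Implicit. Unset Printing Implicit Defensive.
Import GRing.Theory.


Section Up.
Variables (F : finFieldType) (n : nat).
Local Notation V := 'rV[F]_n.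
Local Notation S := {vspace V}.
Local Notation q := #|F|.

Lemma geom m : ((\sum_(i < m) q ^ i) * (q - 1) = q ^ m - 1)%N.
Proof.
have q1 : (1 <= q)%N by apply/card_gt0P; exists 0%R.
elim: m => [|m IH]; first by rewrite big_ord0.
rewrite big_ord_recr /= mulnDl IH expnS.
have : (1 <= q ^ m)%N by rewrite expn_gt0 q1.
move: (q ^ m)%N => p p0; rewrite mulnBr muln1 [(q * p)%N]mulnC.
have := leq_pmulr p q1. move: (p * q)%N => r. lia.
Qed.

Definition upd (a : nat) := (\sum_(i < n - a) q ^ i)%N.

Lemma upd_eq a : (a <= n)%N -> (upd a * (q ^ a.+1 - q ^ a) = q ^ n - q ^ a)%N.
Proof.
move=> an; have E : (q ^ a.+1 - q ^ a = (q - 1) * q ^ a)%N by rewrite expnS mulnBl mul1n.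
by rewrite /upd E mulnA geom mulnBl mul1n -expnD subnK.
Qed.

Definition up (X : S) := [set Y : S | (\dim Y == (\dim X).+1) && (X <= Y)%VS].

Lemma dim_addline (X : S) w : w \notin X -> \dim (X + <[w]>) = (\dim X).+1.
Proof.
move=> wX.
have h1 := dimv_sum_cap X <[w]>. rewrite dim_vline in h1.
have h2 : X != (X + <[w]>)%VS.
  apply: contra wX => /eqP ->. exact: (subvP (addvSr _ _)) _ (memv_line w).
rewrite eqEdim addvSl /= -ltnNge in h2.
have := leq_b1 (w != 0%R). lia.
Qed.

Lemma card_rV : #|V| = (q ^ n)%N.
Proof. by rewrite card_mx mul1n. Qed.

Lemma card_up (X : S) : (\dim X < n)%N ->
  (#|up X| * (q ^ (\dim X).+1 - q ^ \dim X) = q ^ n - q ^ \dim X)%N.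
Proof.
move=> dX.
pose W := [set w : V | w \notin X].
have cW : #|W| = (q ^ n - q ^ \dim X)%N.
  rewrite -card_rV -(cardC (mem X)) card_vspace addKn.
  by apply: eq_card => w; rewrite !inE.
rewrite -cW -[#|W|]sum1_card (partition_big (fun w => (X + <[w]>)%VS) (mem (up X))) /=; last first.
  by move=> w; rewrite !inE => wX; rewrite dim_addline // eqxx addvSl.
rewrite -sum_nat_const; apply: eq_bigr => Y; rewrite inE => /andP [/eqP dY sXY].
rewrite sum1_card.
have -> : (q ^ (\dim X).+1 - q ^ \dim X)%N = #|[predD Y & X]|.
  have cI : #|[predI mem Y & mem X]| = #|X|.
    apply: eq_card => w; rewrite !inE.
    apply/andP/idP => [[] // | Hw]; split => //; exact: (subvP sXY).
  by rewrite -dY -!card_vspace -(cardID (mem X) (mem Y)) cI addKn.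
apply: eq_card => w; rewrite !inE.
apply/andP/andP => [[wX wY] | [wX /eqP E]]; split => //.
  by rewrite inE.
  apply/eqP; apply/eqP; rewrite eqEdim subv_add sXY -memvE wY /= dY dim_addline //.
  by move: wX; rewrite inE.
by rewrite -E; apply: (subvP (addvSr _ _)); apply: memv_line.
Qed.
End Up.

End P2.
Import P2.

Module P3.
Set Implicit Arguments. Unset Strict Implicit. Unset Printing Implicit Defensive.
Import GRing.Theory.

Section Count.
Variables (F : finFieldType) (n : nat).
Local Notation V := 'rV[F]_n.
Local Notation S := {vspace V}.
Local Notation q := #|F|.

Definition L a := [set X : S | \dim X == a].
Definition down (Y : S) := [set X : S | ((\dim X).+1 == \dim Y) && (X <= Y)%VS].

Lemma q_gt1 : (1 < q)%N. Proof. exact: finNzRing_gt1. Qed.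

Lemma up_card_eq (X : S) : (\dim X < n)%N -> #|up X| = upd F n (\dim X).
Proof.
move=> dX; have := card_up dX; rewrite -(upd_eq F (ltnW dX)) => /eqP.
rewrite eqn_pmul2r ?subn_gt0 ?ltn_exp2l ?q_gt1 //; exact: eqP.
Qed.

Lemma down_card_eq (Y : S) : (0 < \dim Y)%N -> #|down Y| = upd F n (n - \dim Y).
Proof.
move=> dY0.
have dYn := dimS_n Y.
have -> : down Y = (@orth F n) @^-1: up (orth Y).
  apply/setP => X; rewrite !inE !dim_orth.
  have dXn := dimS_n X.
  apply/andP/andP => [[/eqP dX sXY] | [/eqP dX sXY]]; split.
  - apply/eqP; lia.
  - exact: orthS.
  - apply/eqP; lia.
  - by rewrite -(orthK X) -(orthK Y) orthS.
rewrite card_preimset; last exact: (@orth_inj F n).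
by rewrite up_card_eq dim_orth //; lia.
Qed.

Lemma up_L (X : S) a : \dim X = a -> up X =i [pred Y | (Y \in L a.+1) && (X <= Y)%VS].
Proof. by move=> dX Y; rewrite !inE dX. Qed.

Lemma down_L (Y : S) a : \dim Y = a.+1 -> down Y =i [pred X | (X \in L a) && (X <= Y)%VS].
Proof. by move=> dY X; rewrite !inE dY eqSS. Qed.

Lemma exch a (f : S -> S -> nat) :
  (\sum_(X in L a) \sum_(Y in up X) f X Y =
   \sum_(Y in L a.+1) \sum_(X in down Y) f X Y)%N.
Proof.
rewrite (eq_bigr (fun X => \sum_(Y | (Y \in L a.+1) && (X <= Y)%VS) f X Y)); last first.
  by move=> X; rewrite inE => /eqP dX; apply: eq_bigl => Y; rewrite (up_L dX).
rewrite (exchange_big_dep (mem (L a.+1))) /=; last by move=> X Y _ /andP [].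
apply: eq_bigr => Y; rewrite inE => /eqP dY; apply: eq_bigl => X.
by rewrite (down_L dY) !inE dY eqxx.
Qed.

Lemma sum_const_in (A : {set S}) c : (\sum_(X in A) c = #|A| * c)%N.
Proof. exact: sum_nat_const. Qed.

Lemma dc_identity a : (a < n)%N -> (#|L a| * upd F n a = #|L a.+1| * upd F n (n - a.+1))%N.
Proof.
move=> an.
have E1 : (\sum_(X in L a) \sum_(Y in up X) 1 = #|L a| * upd F n a)%N.
  rewrite -sum_const_in; apply: eq_bigr => X; rewrite inE => /eqP dX.
  by rewrite sum1_card up_card_eq dX.
have E2 : (\sum_(Y in L a.+1) \sum_(X in down Y) 1 = #|L a.+1| * upd F n (n - a.+1))%N.
  rewrite -sum_const_in; apply: eq_bigr => Y; rewrite inE => /eqP dY.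
  by rewrite sum1_card down_card_eq dY.
by rewrite -E1 -E2 exch.
Qed.

Lemma sum_in_card (A C : {set S}) : (\sum_(X in A) (X \in C) = #|C :&: A|)%N.
Proof.
rewrite -sum1_card big_mkcond /= [RHS]big_mkcond /=; apply: eq_bigr => X _.
by rewrite !inE; case: (X \in C); case: (X \in A).
Qed.

Lemma edge (C : {set S}) a : is_code 2 C -> (a < n)%N ->
  (#|C :&: L a| * upd F n a + #|C :&: L a.+1| * upd F n (n - a.+1) <= #|L a| * upd F n a)%N.
Proof.
move=> HC an.
have E1 : (\sum_(X in L a) \sum_(Y in up X) 1 = #|L a| * upd F n a)%N.
  rewrite -sum_const_in; apply: eq_bigr => X; rewrite inE => /eqP dX.
  by rewrite sum1_card up_card_eq dX.
have A1 : (\sum_(X in L a) \sum_(Y in up X) (X \in C) = #|C :&: L a| * upd F n a)%N.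
  rewrite -sum_in_card big_distrl /=; apply: eq_bigr => X; rewrite inE => /eqP dX.
  by rewrite sum_const_in up_card_eq dX //; exact: mulnC.
have A2 : (\sum_(X in L a) \sum_(Y in up X) (Y \in C) = #|C :&: L a.+1| * upd F n (n - a.+1))%N.
  rewrite exch -sum_in_card big_distrl /=; apply: eq_bigr => Y; rewrite inE => /eqP dY.
  by rewrite sum_const_in down_card_eq dY //; exact: mulnC.
rewrite -E1 -A1 -A2 -big_split /=; apply: leq_sum => X; rewrite inE => /eqP dX.
rewrite -big_split /=; apply: leq_sum => Y; rewrite inE => /andP [/eqP dY sXY].
case XC: (X \in C); case YC: (Y \in C) => //=.
move/forallP: HC => /(_ X) /implyP /(_ XC) /forallP /(_ Y) /implyP /(_ YC) /implyP.
have nXY : X != Y by apply/eqP => E; move: dY; rewrite -E dX; lia.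
move=> /(_ nXY); rewrite /dS (addv_idPr sXY) (capv_idPl sXY) dY; lia.
Qed.
End Count.

End P3.
Import P3.

Module P4.
Set Implicit Arguments. Unset Strict Implicit. Unset Printing Implicit Defensive.
Import Order.TTheory GRing.Theory Num.Theory.
Local Open Scope ring_scope.

Section LP.
Variable w : nat -> rat.

Fixpoint zz a : rat := if a is a'.+1 then w a'.+1 - zz a' else w 0%N.

Lemma LP_id (y : nat -> rat) m :
  \sum_(a < m.+1) w a * y a + \sum_(a < m) zz a * (1 - y a - y a.+1)
  = \sum_(a < m) zz a + zz m * y m.
Proof.
elim: m => [|m IH]; first by rewrite !big_ord0 big_ord1 /= addr0 add0r.
rewrite (big_ord_recr m.+1 (fun a : 'I_m.+2 => w a * y a)) (big_ord_recr m (fun a : 'I_m.+1 => zz a * (1 - y a - y a.+1))) (big_ord_recr m (fun a : 'I_m.+1 => zz a)) /=.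
have E : \sum_(i < m.+1) w i * y i + w m.+1 * y m.+1 +
   (\sum_(i < m) zz i * (1 - y i - y i.+1) + zz m * (1 - y m - y m.+1)) =
   (\sum_(i < m.+1) w i * y i + \sum_(i < m) zz i * (1 - y i - y i.+1)) +
   w m.+1 * y m.+1 + zz m * (1 - y m - y m.+1) by ring.
rewrite E IH; ring.
Qed.

Lemma sum_w_z m : \sum_(a < m.+1) w a = \sum_(a < m) zz a + \sum_(a < m.+1) zz a.
Proof.
elim: m => [|m IH]; first by rewrite big_ord0 !big_ord1 add0r.
rewrite (big_ord_recr m.+1 (fun a : 'I_m.+2 => w a)) IH (big_ord_recr m.+1 (fun a : 'I_m.+2 => zz a)) (big_ord_recr m (fun a : 'I_m.+1 => zz a)) /=.
ring.
Qed.

Hypothesis w0 : 0 < w 0%N.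

Lemma zz_pos m : (forall a, (a < m)%N -> w a < w a.+1) ->
  forall a, (a <= m)%N -> 0 < zz a /\ zz a <= w a.
Proof.
move=> Hw; elim=> [|a IH] am /=; first by split; rewrite ?lexx.
have [h1 h2] := IH (ltnW am).
have h3 := Hw a am.
case: a IH am h1 h2 h3 => [|a] IH am h1 h2 h3 /=; first by split; lra.
have [h4 h5] := IH (ltnW am).
move: h1 h2; rewrite /= => h1 h2.
have h6 := Hw a (ltnW am).
split; lra.
Qed.

End LP.

Lemma slack_nonneg (z y : nat -> rat) m :
  (forall a, (a < m)%N -> 0 <= z a) -> (forall a, (a < m)%N -> y a + y a.+1 <= 1) ->
  0 <= \sum_(a < m) z a * (1 - y a - y a.+1).
Proof.
move=> Hz Hy; apply: sumr_ge0 => a _; apply: mulr_ge0; first exact: Hz.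
have := Hy a (ltn_ord a); lra.
Qed.

Lemma slack_zero (z y : nat -> rat) m :
  (forall a, (a < m)%N -> 0 < z a) -> (forall a, (a < m)%N -> y a + y a.+1 <= 1) ->
  \sum_(a < m) z a * (1 - y a - y a.+1) = 0 ->
  forall a, (a < m)%N -> y a + y a.+1 = 1.
Proof.
move=> Hz Hy H0 a am.
have Hnn : forall i : 'I_m, predT i -> 0 <= z i * (1 - y i - y i.+1).
  move=> i _; apply: mulr_ge0; first exact: ltW (Hz i (ltn_ord i)).
  have := Hy i (ltn_ord i); lra.
have := @psumr_eq0P _ _ predT (fun i : 'I_m => z i * (1 - y i - y i.+1)) Hnn H0 (Ordinal am) isT.
move=> /= /eqP; rewrite mulf_eq0 => /orP [/eqP h| /eqP h].
  by have := Hz a am; rewrite h ltxx.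
lra.
Qed.

End P4.
Import P4.

Module P5.
Set Implicit Arguments. Unset Strict Implicit. Unset Printing Implicit Defensive.
Import Order.TTheory GRing.Theory Num.Theory.
Local Open Scope ring_scope.

Lemma alternate (y : nat -> rat) n : (forall a, (a < n)%N -> y a + y a.+1 = 1) ->
  forall a, (a <= n)%N -> y a = if odd a then 1 - y 0%N else y 0%N.
Proof.
move=> H; elim=> [|a IH] an //=.
have := H a an; rewrite IH ?(ltnW an) //; case: (odd a) => /=; lra.
Qed.

Lemma bump0 i : bump 0 i = i.+1. Proof. by rewrite /bump add1n. Qed.

Lemma split_odd (f : nat -> rat) k :
  \sum_(a < k.*2.+2) f a = \sum_(a < k.+1) f a + \sum_(a < k.+1) f (k.*2.+1 - a)%N.
Proof.
elim: k f => [|k IH] f; first by rewrite !big_ord_recr !big_ord0 /= !add0r.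
rewrite (big_ord_recl k.*2.+3) (big_ord_recr k.*2.+2 (fun i : 'I_(k.*2.+3) => f (bump 0 i))) /=.
rewrite (big_ord_recl k.+1 f) (big_ord_recl k.+1 (fun i : 'I_k.+2 => f (k.*2.+3 - i)%N)) /=.
have E1 : \sum_(i < k.*2.+2) f (bump 0 i) = \sum_(i < k.*2.+2) (fun a => f a.+1) i.
  by apply: eq_bigr => i _; rewrite bump0.
rewrite E1 (IH (fun a => f a.+1)).
have E2 : \sum_(i < k.+1) f (bump 0 i) = \sum_(i < k.+1) f i.+1.
  by apply: eq_bigr => i _; rewrite bump0.
have E3 : \sum_(i < k.+1) f (k.*2.+3 - bump 0 i)%N = \sum_(i < k.+1) f (k.*2.+1 - i).+1%N.
  by apply: eq_bigr => i _; rewrite bump0; congr f; have := ltn_ord i; lia.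
rewrite E2 E3 subn0 bump0 /=.
ring.
Qed.

Lemma split_even (f : nat -> rat) k :
  \sum_(a < k.*2.+1) f a = \sum_(a < k) f a + f k + \sum_(a < k) f (k.*2 - a)%N.
Proof.
elim: k f => [|k IH] f; first by rewrite !big_ord_recr !big_ord0 /= !add0r addr0.
rewrite (big_ord_recl k.*2.+2) (big_ord_recr k.*2.+1 (fun i : 'I_(k.*2.+2) => f (bump 0 i))) /=.
rewrite (big_ord_recl k f) (big_ord_recl k (fun i : 'I_k.+1 => f (k.*2.+2 - i)%N)) /=.
have E1 : \sum_(i < k.*2.+1) f (bump 0 i) = \sum_(i < k.*2.+1) (fun a => f a.+1) i.
  by apply: eq_bigr => i _; rewrite bump0.
rewrite E1 (IH (fun a => f a.+1)).
have E2 : \sum_(i < k) f (bump 0 i) = \sum_(i < k) f i.+1.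
  by apply: eq_bigr => i _; rewrite bump0.
have E3 : \sum_(i < k) f (k.*2.+2 - bump 0 i)%N = \sum_(i < k) f (k.*2 - i).+1%N.
  by apply: eq_bigr => i _; rewrite bump0; congr f; have := ltn_ord i; lia.
rewrite E2 E3 subn0 bump0 /=.
ring.
Qed.

End P5.
Import P5.

Module P6.
Set Implicit Arguments. Unset Strict Implicit. Unset Printing Implicit Defensive.
Import Order.TTheory GRing.Theory Num.Theory.
Local Open Scope ring_scope.

Lemma sumz_par (w : nat -> rat) m :
  \sum_(a < m) zz w a = \sum_(a < m | odd a != odd m) w a.
Proof.
suff H : forall m0, (\sum_(a < m0) zz w a = \sum_(a < m0 | odd a != odd m0) w a) /\
  (\sum_(a < m0.+1) zz w a = \sum_(a < m0.+1 | odd a != odd m0.+1) w a) by case: (H m).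
clear m; elim=> [|m [IH1 IH2]].
  split; first by rewrite !big_ord0.
  by rewrite [X in _ = X]big_mkcond !big_ord1 /=.
split => //.
rewrite (big_ord_recr m.+1 (fun i : 'I_m.+2 => zz w i)) (big_ord_recr m (fun i : 'I_m.+1 => zz w i)) /=.
rewrite [X in _ = X]big_mkcond (big_ord_recr m.+1) (big_ord_recr m) /= negbK eqxx /=.
have -> : (~~ odd m != odd m) by case: (odd m).
rewrite IH1 /= [X in X + _ + _ = _]big_mkcond /=; ring.
Qed.

Lemma case_odd k (w y : nat -> rat) :
  (forall a, (a <= k.*2.+1)%N -> 0 <= y a) ->
  (forall a, (a < k.*2.+1)%N -> y a + y a.+1 <= 1) ->
  (forall a, (a < k)%N -> w a < w a.+1) -> 0 < w 0%N ->
  (forall a, (a <= k.*2.+1)%N -> w (k.*2.+1 - a)%N = w a) ->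
  \sum_(a < k.*2.+2) w a * y a <= \sum_(a < k.+1) w a /\
  (\sum_(a < k.*2.+2) w a * y a = \sum_(a < k.+1) w a ->
     forall a, (a < k.*2.+1)%N -> y a + y a.+1 = 1).
Proof.
move=> Hy0 Hy Hw w0 Hsym.
pose y' a := y (k.*2.+1 - a)%N.
have Hs : \sum_(a < k.*2.+2) w a * y a =
    \sum_(a < k.+1) w a * y a + \sum_(a < k.+1) w a * y' a.
  rewrite (split_odd (fun a => w a * y a)); congr (_ + _); apply: eq_bigr => i _.
  by rewrite Hsym //; have := ltn_ord i; lia.
have L1 := LP_id w y k.
have L2 := LP_id w y' k.
have Wz := sum_w_z w k.
rewrite (big_ord_recr k (fun i => zz w i)) /= in Wz.
have Zp := zz_pos w0 Hw.
have [zk0 _] := Zp k (leqnn k).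
have S1 : 0 <= \sum_(a < k) zz w a * (1 - y a - y a.+1).
  apply: slack_nonneg => a ak; first exact: ltW (proj1 (Zp a (ltnW ak))).
  by apply: Hy; lia.
have Hy' : forall a, (a < k)%N -> y' a + y' a.+1 <= 1.
  move=> a ak; rewrite /y' addrC.
  have := Hy (k.*2.+1 - a.+1)%N; have -> : (k.*2.+1 - a.+1).+1 = (k.*2.+1 - a)%N by lia.
  by apply; lia.
have S2 : 0 <= \sum_(a < k) zz w a * (1 - y' a - y' a.+1).
  apply: slack_nonneg => a ak; first exact: ltW (proj1 (Zp a (ltnW ak))).
  exact: Hy'.
have yk : y' k = y k.+1 by rewrite /y'; congr y; lia.
have M : zz w k * y k + zz w k * y' k <= zz w k.
  rewrite -mulrDr yk -[X in _ <= X]mulr1; apply: ler_wpM2l; first exact: ltW.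
  by apply: Hy; lia.
move: L1 L2 Wz S1 S2 M Hs.
set B := \sum_(a < k) zz w a * (1 - y a - y a.+1).
set T := \sum_(a < k) zz w a * (1 - y' a - y' a.+1).
set Z := \sum_(a < k) zz w a.
set p1 := zz w k * y k. set p2 := zz w k * y' k.
move=> L1 L2 Wz S1 S2 M Hs.
split; first lra.
move=> Heq.
have eB : B = 0 by lra.
have eT : T = 0 by lra.
have eM : zz w k * (y k + y' k) = zz w k * 1 by rewrite mulrDr mulr1 -/p1 -/p2; lra.
have eM' : y k + y' k = 1 by apply: (mulfI _ eM); rewrite gt_eqF.
have Hyk : forall a, (a < k)%N -> y a + y a.+1 <= 1 by move=> a ak; apply: Hy; lia.
have Zk : forall a, (a < k)%N -> 0 < zz w a by move=> a ak; exact: (proj1 (Zp a (ltnW ak))).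
have HB := slack_zero Zk Hyk eB.
have HT := slack_zero Zk Hy' eT.
move=> a an; case: (ltngtP a k) => [ak | ka | ->]; first exact: HB.
  have := HT (k.*2 - a)%N; rewrite /y'.
  have -> : (k.*2.+1 - (k.*2 - a))%N = a.+1 by lia.
  have -> : (k.*2.+1 - (k.*2 - a).+1)%N = a by lia.
  by rewrite addrC; apply; lia.
by rewrite -yk.
Qed.

Lemma case_even k (w y : nat -> rat) :
  (forall a, (a <= k.+1.*2)%N -> 0 <= y a) ->
  (forall a, (a < k.+1.*2)%N -> y a + y a.+1 <= 1) ->
  (forall a, (a < k.+1)%N -> w a < w a.+1) -> 0 < w 0%N ->
  (forall a, (a <= k.+1.*2)%N -> w (k.+1.*2 - a)%N = w a) ->
  2 * w k < w k.+1 ->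
  \sum_(a < k.+1.*2.+1) w a * y a <= \sum_(a < k.+1.*2.+1 | odd a == odd k.+1) w a /\
  (\sum_(a < k.+1.*2.+1) w a * y a = \sum_(a < k.+1.*2.+1 | odd a == odd k.+1) w a ->
     y k.+1 = 1 /\ forall a, (a < k.+1.*2)%N -> y a + y a.+1 = 1).
Proof.
move=> Hy0 Hy Hw w0 Hsym Hc.
pose y' a := y (k.+1.*2 - a)%N.
have Hs : \sum_(a < k.+1.*2.+1) w a * y a =
    \sum_(a < k.+1) w a * y a + w k.+1 * y k.+1 + \sum_(a < k.+1) w a * y' a.
  rewrite (split_even (fun a => w a * y a)); congr (_ + _); apply: eq_bigr => i _.
  by rewrite Hsym //; have := ltn_ord i; lia.
have Hw' : forall a, (a < k)%N -> w a < w a.+1 by move=> a ak; apply: Hw; lia.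
have Zp := zz_pos w0 Hw'.
have Hz := sumz_par w k.
have HT : \sum_(a < k.+1.*2.+1 | odd a == odd k.+1) w a =
    2 * \sum_(a < k) zz w a + w k.+1.
  rewrite big_mkcond /= (split_even (fun a => if odd a == odd k.+1 then w a else 0)) /=.
  rewrite eqxx Hz.
  have E1 : \sum_(a < k.+1) (if odd a == ~~ odd k then w a else 0) =
            \sum_(a < k | odd a != odd k) w a.
    rewrite (big_ord_recr k) /= [X in _ = X]big_mkcond /=.
    have -> : (odd k == ~~ odd k) = false by case: (odd k).
    rewrite addr0; apply: eq_bigr => i _; by case: (odd i); case: (odd k).
  have E2 : \sum_(a < k.+1) (if odd (k.+1.*2 - a) == ~~ odd k then w (k.+1.*2 - a)%N else 0) =
            \sum_(a < k.+1) (if odd a == ~~ odd k then w a else 0).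
    apply: eq_bigr => i _; have ik := ltn_ord i.
    rewrite oddB ?odd_double /=; last by lia.
    by rewrite Hsym; last by lia.
  rewrite E2 E1; ring.
have L1 := LP_id w y k.
have L2 := LP_id w y' k.
have [zk0 zkw] := Zp k (leqnn k).
have Hyk : forall a, (a < k)%N -> y a + y a.+1 <= 1 by move=> a ak; apply: Hy; lia.
have Zk : forall a, (a < k)%N -> 0 < zz w a by move=> a ak; exact: (proj1 (Zp a (ltnW ak))).
have S1 : 0 <= \sum_(a < k) zz w a * (1 - y a - y a.+1).
  by apply: slack_nonneg => a ak; [exact: ltW (Zk a ak) | exact: Hyk].
have Hy' : forall a, (a < k)%N -> y' a + y' a.+1 <= 1.
  move=> a ak; rewrite /y' addrC.
  have := Hy (k.+1.*2 - a.+1)%N; have -> : (k.+1.*2 - a.+1).+1 = (k.+1.*2 - a)%N by lia.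
  by apply; lia.
have S2 : 0 <= \sum_(a < k) zz w a * (1 - y' a - y' a.+1).
  by apply: slack_nonneg => a ak; [exact: ltW (Zk a ak) | exact: Hy'].
have yk : y' k = y k.+2 by rewrite /y'; congr y; lia.
have e1 := Hy k (ltac:(lia)).
have e2 := Hy k.+1 (ltac:(lia)).
have g1 := Hy0 k (ltac:(lia)).
have g2 := Hy0 k.+2 (ltac:(lia)).
have M1 : zz w k * y k + zz w k * y k.+1 <= zz w k.
  rewrite -mulrDr -[X in _ <= X]mulr1; apply: ler_wpM2l; [exact: ltW | exact: e1].
have M2 : zz w k * y' k + zz w k * y k.+1 <= zz w k.
  rewrite -mulrDr -[X in _ <= X]mulr1 yk addrC; apply: ler_wpM2l; [exact: ltW | exact: e2].
have C0 : 0 <= (w k.+1 - 2 * zz w k) * (1 - y k.+1).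
  by apply: mulr_ge0; lra.
have E : (w k.+1 - 2 * zz w k) * (1 - y k.+1) =
   w k.+1 - w k.+1 * y k.+1 - 2 * zz w k + 2 * (zz w k * y k.+1) by ring.
rewrite E in C0.
move: L1 L2 S1 S2 M1 M2 Hs HT C0.
set B := \sum_(a < k) zz w a * (1 - y a - y a.+1).
set T := \sum_(a < k) zz w a * (1 - y' a - y' a.+1).
set Z := \sum_(a < k) zz w a.
set p1 := zz w k * y k. set p2 := zz w k * y' k. set p3 := zz w k * y k.+1.
set p4 := w k.+1 * y k.+1.
move=> L1 L2 S1 S2 M1 M2 Hs HT C0.
split; first lra.
move=> Heq.
have eB : B = 0 by lra.
have eT : T = 0 by lra.
have eC0 : w k.+1 - p4 - 2 * zz w k + 2 * p3 = 0 by lra.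
have eC : (w k.+1 - 2 * zz w k) * (1 - y k.+1) = 0 by rewrite E; exact: eC0.
have nz : w k.+1 - 2 * zz w k != 0.
  apply/eqP => h0; move: h0 zkw Hc; clear; lra.
have yc : y k.+1 = 1.
  move: eC => /eqP; rewrite mulf_eq0 (negbTE nz) /= => /eqP h; move: h; clear; lra.
split => //.
have HB := slack_zero Zk Hyk eB.
have HT' := slack_zero Zk Hy' eT.
move=> a an; case: (ltngtP a k) => [ak | ka | ->]; first exact: HB.
  case: (ltngtP a k.+1) => [ak1 | ka1 | ->]; first by exfalso; move: ka ak1; clear; lia.
    have j1 : (k.+1.*2 - a.+1 < k)%N by move: an ka1; clear; lia.
    have := HT' _ j1; rewrite /y'.
    have -> : (k.+1.*2 - (k.+1.*2 - a.+1))%N = a.+1 by move: an ka1; clear; lia.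
    have -> : (k.+1.*2 - (k.+1.*2 - a.+1).+1)%N = a by move: an ka1; clear; lia.
    by rewrite addrC.
  move: e2 g2; rewrite yc; clear; lra.
move: e1 g1; rewrite yc; clear; lra.
Qed.

End P6.
Import P6.

Module P7.
Set Implicit Arguments. Unset Strict Implicit. Unset Printing Implicit Defensive.
Import GRing.Theory.

Section Glue.
Variables (F : finFieldType) (n : nat).
Local Notation V := 'rV[F]_n.
Local Notation S := {vspace V}.
Local Notation q := #|F|.
Local Notation g a := #|@L F n a|.
Local Notation upd := (upd F n).

Lemma card_part (A : {set S}) : #|A| = (\sum_(i < n.+1) #|A :&: L F n i|)%N.
Proof.
rewrite -sum1_card (partition_big (fun X : S => (inord (\dim X) : 'I_n.+1)) predT) //=.
apply: eq_bigr => i _; rewrite sum1dep_card; apply: eq_card => X; rewrite !inE.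
have hX : (\dim X < n.+1)%N by rewrite ltnS dimS_n.
case: (X \in A) => //=; apply/eqP/eqP => [<- | E].
  by rewrite inordK.
by apply: val_inj; rewrite /= inordK // E.
Qed.

Lemma card_dimset (P : pred nat) :
  #|[set X : S | P (\dim X)]| = (\sum_(0 <= i < n.+1 | P i) gauss F n i)%N.
Proof.
rewrite card_part big_mkord [X in _ = X]big_mkcond /=; apply: eq_bigr => i _.
case Pi: (P i); last first.
  apply/eqP; rewrite cards_eq0; apply/eqP/setP => X; rewrite !inE.
  by apply/andP => [[PX /eqP dX]]; move: PX; rewrite dX Pi.
apply: eq_card => X; rewrite !inE; apply/andP/idP => [[] //| /eqP dX]; split => //.
  by rewrite dX Pi.
by rewrite dX.
Qed.

Lemma g0 : g 0 = 1%N.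
Proof.
rewrite -(cards1 (0%VS : S)); apply: eq_card => X; rewrite !inE dimv_eq0 //.
Qed.

Lemma gsym a : (a <= n)%N -> g (n - a) = g a.
Proof.
move=> an.
rewrite -(card_preimset _ (@orth_inj F n)); apply: eq_card => X; rewrite !inE dim_orth.
have hX := dimS_n X; apply/eqP/eqP => E; lia.
Qed.

Lemma upd_rec a : (a < n)%N -> upd a = (q * upd a.+1 + 1)%N.
Proof.
move=> an; rewrite /P2.upd.
have -> : (n - a = (n - a.+1).+1)%N by lia.
rewrite big_ord_recl expn0 big_distrr /= addnC; congr (_ + _)%N.
by apply: eq_bigr => i _; rewrite /bump /= add1n expnS.
Qed.

Lemma upd_pos a : (a < n)%N -> (0 < upd a)%N.
Proof. by move=> an; rewrite upd_rec // addn1. Qed.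

Lemma upd_decr b c : (b < c)%N -> (c <= n)%N -> (upd c < upd b)%N.
Proof.
move=> bc; elim: c bc => [//|c IH] bc cn.
have q1 : (1 <= q)%N by apply: ltnW; apply: q_gt1.
have h : (upd c.+1 < upd c)%N.
  rewrite (upd_rec (a:=c)) //; have := leq_pmull (upd c.+1) q1; lia.
move: bc; rewrite ltnS leq_eqVlt => /orP [/eqP -> //| bc].
exact: ltn_trans h (IH bc (ltnW cn)).
Qed.

Lemma gpos a : (a <= n)%N -> (0 < g a)%N.
Proof.
elim: a => [|a IH] an; first by rewrite g0.
have := dc_identity F an; have := IH (ltnW an); have := upd_pos an.
move: (g a) (g a.+1) (upd a) (upd (n - a.+1)) => x y u v; nia.
Qed.

Lemma ginc a : (a < n - a.+1)%N -> (g a < g a.+1)%N.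
Proof.
move=> h.
have an : (a < n)%N by lia.
have E := dc_identity F an.
have d := upd_decr h (leq_subr _ _).
have p := gpos (ltnW an).
have m : (0 < upd (n - a.+1))%N by apply: upd_pos; lia.
move: E d p m; move: (g a) (g a.+1) (upd a) (upd (n - a.+1)) => x y u v; nia.
Qed.

Lemma gcenter k : n = k.+1.*2 -> (2 * g k < g k.+1)%N.
Proof.
move=> hn.
have kn : (k < n)%N by lia.
have E := dc_identity F kn.
have hk : (n - k.+1 = k.+1)%N by lia.
rewrite hk in E.
rewrite (upd_rec kn) in E.
have p := gpos (ltnW kn).
have m : (0 < upd k.+1)%N by apply: upd_pos; lia.
have q2 := @q_gt1 F.
move: E p m q2; move: (g k) (g k.+1) (upd k.+1) q => x y u r E p m q2.
have hh : (2 * u <= r * u)%N by apply: leq_mul.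
have hx : (x * (2 * u) <= x * (r * u))%N by apply: leq_mul.
have : (2 * x * u < y * u)%N by rewrite -E mulnDr muln1 -mulnA mulnCA; lia.
by rewrite ltn_pmul2r.
Qed.
End Glue.

End P7.
Import P7.

Module P8.
Set Implicit Arguments. Unset Strict Implicit. Unset Printing Implicit Defensive.
Import Order.TTheory GRing.Theory Num.Theory.
Local Open Scope ring_scope.

Lemma frac_edge (x1 x2 g1 g2 N M : nat) : (0 < g1)%N -> (0 < g2)%N -> (0 < N)%N ->
  (g1 * N = g2 * M)%N -> (x1 * N + x2 * M <= g1 * N)%N ->
  x1%:R / g1%:R + x2%:R / g2%:R <= 1 :> rat.
Proof.
move=> p1 p2 pN hid hle.
have hP : 0 < (g1 * N)%:R :> rat by rewrite ltr0n muln_gt0 p1 pN.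
rewrite -(ler_pM2r hP) mul1r mulrDl.
have e1 : x1%:R / g1%:R * (g1 * N)%:R = (x1 * N)%:R :> rat.
  by rewrite natrM mulrA divfK ?pnatr_eq0 -?lt0n // natrM.
have e2 : x2%:R / g2%:R * (g1 * N)%:R = (x2 * M)%:R :> rat.
  by rewrite hid natrM mulrA divfK ?pnatr_eq0 -?lt0n // natrM.
by rewrite e1 e2 -natrD ler_nat.
Qed.

Section Final.
Variables (F : finFieldType) (n : nat).
Local Notation V := 'rV[F]_n.
Local Notation S := {vspace V}.
Local Notation g a := #|@L F n a|.

Definition xx (C : {set S}) a := #|C :&: L F n a|.
Definition wr a : rat := (g a)%:R.
Definition yr (C : {set S}) a : rat := (xx C a)%:R / (g a)%:R.

Lemma yr_ge0 C a : 0 <= yr C a.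
Proof. by rewrite /yr divr_ge0 ?ler0n. Qed.

Lemma yr_edge C a : is_code 2 C -> (a < n)%N -> yr C a + yr C a.+1 <= 1.
Proof.
move=> HC an; apply: (@frac_edge _ _ _ _ (upd F n a) (upd F n (n - a.+1))).
- exact: gpos (ltnW an).
- exact: gpos an.
- exact: upd_pos an.
- exact: (dc_identity _ an).
- exact: (edge HC an).
Qed.

Lemma sum_yr (C : {set S}) : (#|C|)%:R = \sum_(a < n.+1) wr a * yr C a.
Proof.
rewrite card_part natr_sum; apply: eq_bigr => a _.
rewrite /wr /yr mulrC divfK // pnatr_eq0 -lt0n; apply: gpos.
by rewrite -ltnS.
Qed.

Lemma set_from_y (C : {set S}) (P : pred nat) :
  (forall a, (a <= n)%N -> yr C a = if P a then 1 else 0) -> C = [set X | P (\dim X)].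
Proof.
move=> H; apply/setP => X; rewrite inE.
have dX := dimS_n X.
have := H _ dX; rewrite /yr /xx.
have gp : (g (\dim X))%:R != 0 :> rat by rewrite pnatr_eq0 -lt0n gpos.
have XL : X \in L F n (\dim X) by rewrite inE.
case: (P (\dim X)) => E.
  have E' : #|C :&: L F n (\dim X)| = g (\dim X).
    by apply/eqP; rewrite -(eqr_nat rat) -(divfK gp (_%:R)) E mul1r.
  have : C :&: L F n (\dim X) == L F n (\dim X) by rewrite eqEcard subsetIr E' leqnn.
  by move/eqP => E2; move: XL; rewrite -E2 inE => /andP [].
have E' : #|C :&: L F n (\dim X)| = 0%N.
  by apply/eqP; rewrite -(eqr_nat rat) -(divfK gp (_%:R)) E mul0r.
apply/negP => XC.
have : X \in C :&: L F n (\dim X) by rewrite inE XC XL.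
by rewrite (cards0_eq E') inE.
Qed.
End Final.

End P8.
Import P8.

Module P9.
Set Implicit Arguments. Unset Strict Implicit. Unset Printing Implicit Defensive.
Import Order.TTheory GRing.Theory Num.Theory.
Local Open Scope ring_scope.

Section Main.
Variables (F : finFieldType) (n : nat).
Local Notation V := 'rV[F]_n.
Local Notation S := {vspace V}.
Local Notation g a := #|@L F n a|.

Lemma parity_code (C : {set S}) b : (forall X, X \in C -> odd (\dim X) = b) -> is_code 2 C.
Proof.
move=> H; apply/forallP => X; apply/implyP => XC; apply/forallP => Y; apply/implyP => YC.
apply/implyP => nXY; rewrite /dS.
have h := dimv_sum_cap X Y.
have hx := dimvS (addvSl X Y); have hy := dimvS (addvSr X Y).
have cx := dimvS (capvSl X Y); have cy := dimvS (capvSr X Y).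
move: h hx hy cx cy.
set s := \dim (X + Y); set c := \dim (X :&: Y) => h hx hy cx cy.
have nz : (s - c != 0)%N.
  apply/eqP => E.
  have eX : (X :&: Y)%VS = X.
    apply/eqP; rewrite eqEdim capvSl /= -/c; lia.
  have eY : (X :&: Y)%VS = Y.
    apply/eqP; rewrite eqEdim capvSr /= -/c; lia.
  by move: nXY; rewrite -eX -{2}eY eqxx.
have od : odd (s - c) = false.
  rewrite oddB; last by lia.
  have : odd (s + c) = odd (\dim X + \dim Y) by rewrite h.
  rewrite !oddD (H X XC) (H Y YC); clear H; by case: b; case: (odd s); case: (odd c).
move: nz od; case: (s - c)%N => [|[|d]] //.
Qed.

Lemma Aq_eq (P : {set S}) : is_code 2 P -> (forall C : {set S}, is_code 2 C -> (#|C| <= #|P|)%N) ->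
  Aq F n 2 = #|P|.
Proof.
move=> HP H; apply/eqP; rewrite eqn_leq; apply/andP; split.
  by apply/bigmax_leqP => C; apply: H.
rewrite /Aq. have := (@leq_bigmax_cond _ (fun C : {set S} => is_code 2 C) (fun C : {set S} => #|C|) P HP). move=> hh. exact: hh.
Qed.

Lemma card_dimset_r (P : pred nat) :
  (#|[set X : S | P (\dim X)]|)%:R = \sum_(a < n.+1 | P a) wr F n a.
Proof. by rewrite card_dimset big_mkord natr_sum. Qed.

Lemma even_main k : n = k.+1.*2 -> forall C : {set S}, is_code 2 C ->
  (#|C| <= #|[set X : S | odd (\dim X) == odd k.+1]|)%N /\
  (#|C| = #|[set X : S | odd (\dim X) == odd k.+1]| ->
     C = [set X : S | odd (\dim X) == odd k.+1]).
Proof.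
move=> hn C HC.
have H1 : forall a, (a <= k.+1.*2)%N -> 0 <= yr C a by move=> a _; apply: yr_ge0.
have H2 : forall a, (a < k.+1.*2)%N -> yr C a + yr C a.+1 <= 1.
  by move=> a; rewrite -hn; apply: yr_edge.
have H3 : forall a, (a < k.+1)%N -> wr F n a < wr F n a.+1.
  by move=> a ak; rewrite /wr ltr_nat; apply: ginc; lia.
have H4 : 0 < wr F n 0 by rewrite /wr g0 ltr01.
have H5 : forall a, (a <= k.+1.*2)%N -> wr F n (k.+1.*2 - a)%N = wr F n a.
  by move=> a; rewrite -hn => an; rewrite /wr gsym.
have H6 : 2 * wr F n k < wr F n k.+1.
  by rewrite /wr -natrM ltr_nat; apply: gcenter.
have [Hb He] := case_even H1 H2 H3 H4 H5 H6.
rewrite -hn in Hb He.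
have T := card_dimset_r (fun a => odd a == odd k.+1).
have Sy := sum_yr C.
split; first by rewrite -(ler_nat rat) Sy T.
move=> Heq.
have [yc Hedge] : yr C k.+1 = 1 /\ (forall a, (a < n)%N -> yr C a + yr C a.+1 = 1).
  by apply: He; rewrite -Sy -T Heq.
have Alt := alternate Hedge.
apply: (@set_from_y F n C (fun a => odd a == odd k.+1)) => a an; rewrite Alt //.
have := Alt k.+1 (ltac:(lia)); rewrite yc.
case: (odd k.+1) => /= E.
  have y0 : yr C 0 = 0 by lra.
  by rewrite y0 subr0; case: (odd a).
by rewrite -E; case: (odd a).
Qed.

Lemma orth_Ev k : n = k.*2.+1 ->
  (@orth F n) @: [set X : S | ~~ odd (\dim X)] = [set X : S | odd (\dim X)].
Proof.
move=> hn.
rewrite (can_imset_pre _ (@orthK F n)); apply/setP => Z; rewrite !inE dim_orth.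
have on : odd n = true by rewrite hn /= odd_double.
rewrite oddB ?dimS_n // on /=; by case: (odd (\dim Z)).
Qed.

Lemma card_Ev_Od k : n = k.*2.+1 ->
  #|[set X : S | ~~ odd (\dim X)]| = #|[set X : S | odd (\dim X)]|.
Proof.
move=> hn; rewrite -(orth_Ev hn) card_imset //; exact: orth_inj.
Qed.

Lemma card_Ev k : n = k.*2.+1 ->
  (#|[set X : S | ~~ odd (\dim X)]|)%:R = \sum_(a < k.+1) wr F n a.
Proof.
move=> hn.
have E := card_Ev_Od hn.
have Tall : (#|[set X : S | ~~ odd (\dim X)]| + #|[set X : S | odd (\dim X)]|)%:R
   = \sum_(a < n.+1) wr F n a.
  by rewrite natrD (card_dimset_r (fun a => ~~ odd a)) (card_dimset_r odd) [X in _ = X](bigID (fun a : 'I_n.+1 => odd a)) /= addrC.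
have Sp : \sum_(a < n.+1) wr F n a = 2 * \sum_(a < k.+1) wr F n a.
  have := split_odd (wr F n) k; rewrite -hn => ->.
  have -> : \sum_(a < k.+1) wr F n (n - a)%N = \sum_(a < k.+1) wr F n a.
    apply: eq_bigr => i _; rewrite /wr gsym //; have := ltn_ord i; lia.
  ring.
rewrite -E in Tall; rewrite natrD in Tall.
move: Tall; rewrite Sp => Tall; lra.
Qed.

Lemma odd_main k : n = k.*2.+1 -> forall C : {set S}, is_code 2 C ->
  (#|C| <= #|[set X : S | ~~ odd (\dim X)]|)%N /\
  (#|C| = #|[set X : S | ~~ odd (\dim X)]| ->
     C = [set X : S | ~~ odd (\dim X)] \/ C = [set X : S | odd (\dim X)]).
Proof.
move=> hn C HC.
have H1 : forall a, (a <= k.*2.+1)%N -> 0 <= yr C a by move=> a _; apply: yr_ge0.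
have H2 : forall a, (a < k.*2.+1)%N -> yr C a + yr C a.+1 <= 1.
  by move=> a; rewrite -hn; apply: yr_edge.
have H3 : forall a, (a < k)%N -> wr F n a < wr F n a.+1.
  by move=> a ak; rewrite /wr ltr_nat; apply: ginc; lia.
have H4 : 0 < wr F n 0 by rewrite /wr g0 ltr01.
have H5 : forall a, (a <= k.*2.+1)%N -> wr F n (k.*2.+1 - a)%N = wr F n a.
  by move=> a; rewrite -hn => an; rewrite /wr gsym.
have [Hb He] := case_odd H1 H2 H3 H4 H5.
rewrite -hn in Hb He.
have T := card_Ev hn.
have Sy := sum_yr C.
split; first by rewrite -(ler_nat rat) Sy T.
move=> Heq.
have Hedge : forall a, (a < n)%N -> yr C a + yr C a.+1 = 1.
  by apply: He; rewrite -Sy -T Heq.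
have Alt := alternate Hedge.
have x0 : (xx C 0 <= 1)%N.
  by rewrite /xx -(@g0 F n); apply: subset_leq_card; apply: subsetIr.
have y0 : yr C 0 = (xx C 0)%:R by rewrite /yr g0 divr1.
move: x0; rewrite leq_eqVlt ltnS leqn0 => /orP [/eqP x1 | /eqP x1]; rewrite x1 in y0.
  left; apply: (@set_from_y F n C (fun a => ~~ odd a)) => a an; rewrite Alt // y0.
  by case: (odd a) => /=; rewrite ?subrr.
right; apply: (@set_from_y F n C (fun a => odd a)) => a an; rewrite Alt // y0.
by case: (odd a) => /=; rewrite ?subr0.
Qed.

End Main.

End P9.
Import P9.

Unset Implicit Arguments.

Theorem mainTheorem13 (F : finFieldType) :
  (* (i) v = 2k even *)
  (forall k : nat,
     let v := (2 * k)%N in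
     Aq F v 2 = (\sum_(0 <= i < v.+1 | odd i == odd k) gauss F v i)%N /\
     (forall C : {set subspace F v},
        is_code 2 C -> #|C| = Aq F v 2 ->
        C = [set X : subspace F v | odd (\dim X) == odd k])) /\
  (* (ii) v = 2k+1 odd *)
  (forall k : nat,
     let v := (2 * k).+1 in
     let Ev := [set X : subspace F v | ~~ odd (\dim X)] in
     let Od := [set X : subspace F v | odd (\dim X)] in
     Aq F v 2 = (\sum_(0 <= i < v.+1 | ~~ odd i) gauss F v i)%N /\
     Aq F v 2 = (\sum_(0 <= i < v.+1 | odd i) gauss F v i)%N /\
     (forall C : {set subspace F v},
        is_code 2 C -> #|C| = Aq F v 2 -> C = Ev \/ C = Od) /\
     is_code 2 Ev /\ #|Ev| = Aq F v 2 /\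
     is_code 2 Od /\ #|Od| = Aq F v 2 /\
     codes_isomorphic Ev Od).
Proof.
split.
  move=> k; cbv zeta.
  case: k => [|k].
    set P := [set X : subspace F (2 * 0) | odd (\dim X) == odd 0].
    have cP : #|P| = (\sum_(0 <= i < (2 * 0).+1 | odd i == odd 0) gauss F (2 * 0) i)%N.
      exact: (@card_dimset F (2 * 0) (fun i => odd i == odd 0)).
    have PT : P = setT.
      apply/setP => X; have h := dimS_n X.
      have h0 : \dim X = 0%N by move: h; clear; lia.
      by rewrite /P !inE h0.
    have HP : is_code 2 P by apply: (@parity_code F _ P (odd 0)) => X; rewrite inE => /eqP.
    have AP : Aq F (2 * 0) 2 = #|P|.
      by apply: Aq_eq => // C _; rewrite PT; apply: subset_leq_card; apply: subsetT.
    split; first by rewrite AP cP.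
    move=> C _; rewrite AP => EC; apply/eqP; rewrite eqEcard EC leqnn andbT PT.
    exact: subsetT.
  set P := [set X : subspace F (2 * k.+1) | odd (\dim X) == odd k.+1].
  have cP : #|P| = (\sum_(0 <= i < (2 * k.+1).+1 | odd i == odd k.+1) gauss F (2 * k.+1) i)%N.
    exact: (@card_dimset F (2 * k.+1) (fun i => odd i == odd k.+1)).
  have HP : is_code 2 P by apply: (@parity_code F _ P (odd k.+1)) => X; rewrite inE => /eqP.
  have hn : (2 * k.+1 = k.+1.*2)%N by rewrite mul2n.
  have M := @even_main F (2 * k.+1) k hn.
  have AP : Aq F (2 * k.+1) 2 = #|P| by apply: Aq_eq => // C HC; case: (M C HC).
  split; first by rewrite AP cP.
  by move=> C HC; rewrite AP; case: (M C HC).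
move=> k; cbv zeta.
set Ev := [set X : subspace F (2 * k).+1 | ~~ odd (\dim X)].
set Od := [set X : subspace F (2 * k).+1 | odd (\dim X)].
have hn : ((2 * k).+1 = k.*2.+1)%N by rewrite mul2n.
have HE : is_code 2 Ev by apply: (@parity_code F _ Ev false) => X; rewrite inE => /negbTE.
have HO : is_code 2 Od by apply: (@parity_code F _ Od true) => X; rewrite inE => /idP.
have M := @odd_main F _ k hn.
have AE : Aq F (2 * k).+1 2 = #|Ev| by apply: Aq_eq => // C HC; case: (M C HC).
have EO : #|Ev| = #|Od| := @card_Ev_Od F _ k hn.
have cE : #|Ev| = (\sum_(0 <= i < (2 * k).+2 | ~~ odd i) gauss F (2 * k).+1 i)%N.
  exact: (@card_dimset F _ (fun i => ~~ odd i)).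
have cO : #|Od| = (\sum_(0 <= i < (2 * k).+2 | odd i) gauss F (2 * k).+1 i)%N.
  exact: (@card_dimset F _ odd).
split; first by rewrite AE cE.
split; first by rewrite AE EO cO.
split; first by move=> C HC; rewrite AE; case: (M C HC).
split => //; split => //; split => //; split; first by rewrite -EO.
exists (@orth F _); split; last exact: (@orth_Ev F _ k hn).
split; first by exists (@orth F _); apply: orthK.
exact: dS_orth.
Qed.
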